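(* For all CQs $q,q'$ and collections of labeled examples $E=(E^+,E^-)$ (all of the same arity $k$): (1) $q'$ is a $\preceq^{\mathrm{cod}}$-generalization for $(q,E)$ if and only if $q'$ is a most-specific fitting CQ for $(E^+\cup\{e_q\},E^-)$; (2) $q$ is a most-specific fitting CQ for $E$ if and only if $q$ is a $\preceq^{\mathrm{cod}}$-generalization for $(q_\bot,E)$, where, for the relevant schema $\mathcal S=\{R_1,\dots,R_n\}$, $q_\bot$ is the $k$-ary CQ $q_\bot(x,\dots,x)\text{ :- }R_1(x,\dots,x),\dots,R_n(x,\dots,x)$.
   Context: A data example of arity $k$ is a pair $(I,\mathbf a)$ with $I$ a finite database instance and $\mathbf a$ a $k$-tuple of values of $I$. A $k$-ary CQ is $q(x_1,\dots,x_k)\text{ :- }\alpha_1,\dots,\alpha_n$ (relational atoms without constants; answer variables may repeat and each occurs in some atom). $[\![q]\!]$ denotes the set of data examples $(I,\mathbf a)$ with $\mathbf a\in q(I)$; $q_1\subseteq q_2$ is query containment, $\equiv$ equivalence. $E=(E^+,E^-)$ is a pair of sets of data examples; $q$ fits $E$ if $E^+\subseteq[\![q]\!]$ and $E^-\cap[\![q]\!]=\emptyset$. The canonical example $e_q$ of $q(x_1,\dots,x_k)$ is $(I_q,(x_1,\dots,x_k))$ where $I_q$ consists of the atoms of $q$ viewed as facts over the variables. Candidate queries are CQs over the relation symbols occurring in the input. $q_1\preceq^{\mathrm{cod}}_q q_2$ iff $[\![q]\!]\oplus[\![q_1]\!]\subseteq[\![q]\!]\oplus[\![q_2]\!]$ ($\oplus$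 = symmetric difference); $q_1\prec_q q_2$ iff $q_1\preceq_q q_2$ and not $q_2\preceq_q q_1$. A $\preceq^{\mathrm{cod}}$-generalization for $(q,E)$ is a CQ $q'$ that fits $E$ with $q\subseteq q'$ such that there is no CQ $q''$ fitting $E$ with $q\subseteq q''$ and $q''\prec^{\mathrm{cod}}_q q'$. A most-specific fitting CQ for $E$ is a CQ $q$ that fits $E$ such that $q\subseteq q'$ for every CQ $q'$ that fits $E$. *)

(* Defs.v *)
From HB Require Import structures.
From mathcomp Require Import all_boot.

Set Implicit Arguments.
Unset Strict Implicit.
Unset Printing Implicit Defensive.

(* A schema is a finite type of relation symbols [S] with arities [ar].
   Values (of instances) and variables (of queries) are both natural numbers. *)

Definition atom (S : finType) (ar : S -> nat) : Type :=
  {r : S & (ar r).-tuple nat}.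

Definition mk_atom (S : finType) (ar : S -> nat) (r : S) (t : (ar r).-tuple nat)
  : atom ar := @Tagged S r (fun r => (ar r).-tuple nat) t.

Definition instance (S : finType) (ar : S -> nat) : Type := seq (atom ar).

Definition vals_of (S : finType) (ar : S -> nat) (I : instance ar) : seq nat :=
  flatten [seq (tagged f : seq nat) | f : atom ar <- I].

Record dex (S : finType) (ar : S -> nat) (k : nat) : Type :=
  DEx { dinst : instance ar; dtup : k.-tuple nat }.

Definition wf_dex (S : finType) (ar : S -> nat) (k : nat) (e : dex ar k) : Prop :=
  {subset dtup e <= vals_of (dinst e)}.

Record cq (S : finType) (ar : S -> nat) (k : nat) : Type :=
  CQ { head : k.-tuple nat; body : seq (atom ar) }.

Definition is_cq (S : finType) (ar : S -> nat) (k : nat) (q : cq ar k) : Prop :=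
  {subset head q <= vals_of (body q)}.

Definition map_atom (S : finType) (ar : S -> nat) (h : nat -> nat) (f : atom ar)
  : atom ar := mk_atom (map_tuple h (tagged f)).

Definition answer (S : finType) (ar : S -> nat) (k : nat)
  (q : cq ar k) (I : instance ar) (a : k.-tuple nat) : Prop :=
  exists h : nat -> nat,
    (forall f, f \in body q -> map_atom h f \in I) /\ map_tuple h (head q) = a.

Definition denot (S : finType) (ar : S -> nat) (k : nat) (q : cq ar k)
  (e : dex ar k) : Prop :=
  wf_dex e /\ answer q (dinst e) (dtup e).

Definition contained (S : finType) (ar : S -> nat) (k : nat) (q1 q2 : cq ar k) : Prop :=
  forall (I : instance ar) (a : k.-tuple nat), answer q1 I a -> answer q2 I a.

Definition symdiff (T : Type) (A B : T -> Prop) : T -> Prop :=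
  fun x => (A x /\ ~ B x) \/ (B x /\ ~ A x).

Definition cod_le (S : finType) (ar : S -> nat) (k : nat) (q q1 q2 : cq ar k) : Prop :=
  forall e, symdiff (denot q) (denot q1) e -> symdiff (denot q) (denot q2) e.

Definition cod_lt (S : finType) (ar : S -> nat) (k : nat) (q q1 q2 : cq ar k) : Prop :=
  cod_le q q1 q2 /\ ~ cod_le q q2 q1.

Definition examples (S : finType) (ar : S -> nat) (k : nat) : Type :=
  ((dex ar k -> Prop) * (dex ar k -> Prop))%type.

Definition fits (S : finType) (ar : S -> nat) (k : nat) (q : cq ar k)
  (E : examples ar k) : Prop :=
  (forall e, E.1 e -> denot q e) /\ (forall e, E.2 e -> ~ denot q e).

Definition cod_gen (S : finType) (ar : S -> nat) (k : nat) (q : cq ar k)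
  (E : examples ar k) (q' : cq ar k) : Prop :=
  [/\ is_cq q', fits q' E, contained q q' &
      ~ (exists q'' : cq ar k,
           [/\ is_cq q'', fits q'' E, contained q q'' & cod_lt q q'' q'])].

Definition msf (S : finType) (ar : S -> nat) (k : nat) (E : examples ar k)
  (q : cq ar k) : Prop :=
  [/\ is_cq q, fits q E &
      forall q' : cq ar k, is_cq q' -> fits q' E -> contained q q'].

Definition canon (S : finType) (ar : S -> nat) (k : nat) (q : cq ar k) : dex ar k :=
  DEx (body q) (head q).

Definition qbot (S : finType) (ar : S -> nat) (k : nat) : cq ar k :=
  CQ (nseq_tuple k 0) [seq mk_atom (nseq_tuple (ar r) 0) | r <- enum S].

(* Main.v *)
From Stdlib Require Import Classical.
Require Import Defs.
From mathcomp Require Import all_boot.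
From mathcomp Require Import zify.

Set Implicit Arguments.
Unset Strict Implicit.
Unset Printing Implicit Defensive.

Lemma map_atom_comp (S : finType) (ar : S -> nat) (g h : nat -> nat) (f : atom ar) :
  map_atom h (map_atom g f) = map_atom (h \o g) f.
Proof.
case: f => r t; rewrite /map_atom /mk_atom /=; congr Tagged; apply: val_inj => /=.
by rewrite map_comp.
Qed.

Lemma map_atom_id (S : finType) (ar : S -> nat) (f : atom ar) : map_atom id f = f.
Proof.
case: f => r t; rewrite /map_atom /mk_atom /=; congr Tagged; apply: val_inj => /=.
by rewrite map_id.
Qed.

Lemma map_atom_ext (S : finType) (ar : S -> nat) (g1 g2 : nat -> nat) (f : atom ar) :
  g1 =1 g2 -> map_atom g1 f = map_atom g2 f.
Proof.
move=> E; case: f => r t; rewrite /map_atom /mk_atom /=; congr Tagged; apply: val_inj => /=.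
exact: (eq_map E t).
Qed.

Lemma contained_answer (S : finType) (ar : S -> nat) (k : nat) (q1 q2 : cq ar k) :
  contained q1 q2 <-> answer q2 (body q1) (Defs.head q1).
Proof.
split.
  move=> H; apply: H; exists id; split.
    by move=> f Hf; rewrite map_atom_id.
  by apply: val_inj; rewrite /= map_id.
case=> g [Hg Hgh] I a [h [Hh Hhh]]; exists (h \o g); split.
  by move=> f Hf; rewrite -map_atom_comp; apply: Hh; exact: Hg.
by rewrite -Hhh -Hgh; apply: val_inj => /=; rewrite map_comp.
Qed.

Lemma denot_sub (S : finType) (ar : S -> nat) (k : nat) (q1 q2 : cq ar k) :
  contained q1 q2 -> forall e, denot q1 e -> denot q2 e.
Proof. by move=> H e [Hw Ha]; split => //; exact: H. Qed.

Lemma cod_le_iff (S : finType) (ar : S -> nat) (k : nat) (q0 q1 q2 : cq ar k) :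
  is_cq q1 -> contained q0 q1 -> contained q0 q2 ->
  (cod_le q0 q1 q2 <-> contained q1 q2).
Proof.
move=> c1 H01 H02; split.
  move=> Hle; apply/contained_answer.
  have Hc1 : denot q1 (canon q1) by split => //; apply/contained_answer.
  case: (classic (denot q0 (canon q1))) => H0.
    by have [_ ] := (denot_sub H02) _ H0.
  have : symdiff (denot q0) (denot q2) (canon q1) by apply: Hle; right.
  by case=> [[H0' _]|[[_ H2] _]].
move=> H12 e [[A nB]|[B nA]].
  by exfalso; apply: nB; exact: (denot_sub H01) A.
by right; split => //; exact: (denot_sub H12) B.
Qed.

Lemma vals_map (S : finType) (ar : S -> nat) (g : nat -> nat) (B : instance ar) u :
  u \in vals_of B -> g u \in vals_of (map (map_atom g) B).
Proof.
rewrite /vals_of => /flattenP [s /mapP [f fB ->] uf].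
apply/flattenP; exists (map g (tagged f)); last exact: map_f.
apply/mapP; exists (map_atom g f); first exact: map_f.
by case: f {fB uf}.
Qed.

Lemma vals_cat (S : finType) (ar : S -> nat) (A B : instance ar) :
  vals_of (A ++ B) = vals_of A ++ vals_of B.
Proof. by rewrite /vals_of map_cat flatten_cat. Qed.

Lemma meet (S : finType) (ar : S -> nat) (k : nat) (q1 q2 : cq ar k) :
  is_cq q1 -> exists q3, [/\ is_cq q3, contained q3 q1, contained q3 q2 &
    forall I a, answer q1 I a -> answer q2 I a -> answer q3 I a].
Proof.
move=> c1.
set x := Defs.head q1; set y := Defs.head q2.
pose e : rel 'I_k := fun i j => (tnth x i == tnth x j) || (tnth y i == tnth y j).
have esym : connect_sym e.
  apply: sym_connect_sym => i j; by rewrite /e eq_sym [tnth y i == _]eq_sym.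
pose rep (i : 'I_k) := odflt i [pick j | connect e i j].
have repE : forall i j, connect e i j -> rep i = rep j.
  move=> i j cij; rewrite /rep (eq_pick (same_connect esym cij)).
  case: pickP => [//|/(_ j)]; by rewrite connect0.
have repC : forall i, connect e i (rep i).
  move=> i; rewrite /rep; case: pickP => [//|_]; exact: connect0.
pose s1 v := if [pick i | tnth x i == v] is Some i then (rep i) * 3 else v * 3 + 1.
pose s2 v := if [pick i | tnth y i == v] is Some i then (rep i) * 3 else v * 3 + 2.
have s1x : forall i, s1 (tnth x i) = rep i * 3.
  move=> i; rewrite /s1; case: pickP => [j /eqP Hj|/(_ i)]; last by rewrite eqxx.
  by rewrite (repE j i) //; apply: connect1; rewrite /e Hj eqxx.
have s2y : forall i, s2 (tnth y i) = rep i * 3.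
  move=> i; rewrite /s2; case: pickP => [j /eqP Hj|/(_ i)]; last by rewrite eqxx.
  by rewrite (repE j i) //; apply: connect1; rewrite /e Hj eqxx orbT.
have hw : map_tuple s2 y = map_tuple s1 x.
  by apply: eq_from_tnth => i; rewrite !tnth_map s1x s2y.
exists (CQ (map_tuple s1 x) (map (map_atom s1) (body q1) ++ map (map_atom s2) (body q2))).
split.
- move=> v /= /mapP [u ux ->].
  by rewrite vals_cat mem_cat vals_map //; exact: c1.
- apply/contained_answer; exists s1; split => //= f Hf.
  by rewrite mem_cat map_f.
- apply/contained_answer; exists s2; split => //= f Hf.
  by rewrite mem_cat map_f ?orbT.
move=> I a [h1 [H1 E1]] [h2 [H2 E2]].
have Ea : forall i j, connect e i j -> tnth a i = tnth a j.
  have step : forall i j, e i j -> tnth a i = tnth a j.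
    move=> i j /orP [/eqP H|/eqP H].
      by rewrite -E1 !tnth_map H.
    by rewrite -E2 !tnth_map H.
  move=> i j /connectP [p pth ->]; elim: p i pth => [//|z p IH] i /= /andP [eiz pth].
  by rewrite (step _ _ eiz) (IH _ pth).
pose h v := if v %% 3 == 0 then nth 0 a (v %/ 3)
            else if v %% 3 == 1 then h1 (v %/ 3) else h2 (v %/ 3).
have hs1 : forall u, h (s1 u) = h1 u.
  move=> u; rewrite /s1; case: pickP => [i /eqP <-|_].
    rewrite /h; have -> : (rep i * 3) %% 3 = 0 by lia.
    have -> : (rep i * 3) %/ 3 = rep i by lia.
    by rewrite eqxx -tnth_nth -(Ea _ _ (repC i)) -E1 tnth_map.
  rewrite /h; have -> : (u * 3 + 1) %% 3 = 1 by lia.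
  by have -> : (u * 3 + 1) %/ 3 = u by lia.
have hs2 : forall u, h (s2 u) = h2 u.
  move=> u; rewrite /s2; case: pickP => [i /eqP <-|_].
    rewrite /h; have -> : (rep i * 3) %% 3 = 0 by lia.
    have -> : (rep i * 3) %/ 3 = rep i by lia.
    by rewrite eqxx -tnth_nth -(Ea _ _ (repC i)) -E2 tnth_map.
  rewrite /h; have -> : (u * 3 + 2) %% 3 = 2 by lia.
  by have -> : (u * 3 + 2) %/ 3 = u by lia.
exists h; split.
  move=> f /=; rewrite mem_cat => /orP [/mapP [g gB ->]|/mapP [g gB ->]];
    rewrite map_atom_comp.
    by rewrite (map_atom_ext _ hs1); exact: H1.
  by rewrite (map_atom_ext _ hs2); exact: H2.
rewrite -E1; apply: val_inj => /=; rewrite -map_comp; apply: eq_map => u; exact: hs1.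
Qed.

Lemma key (S : finType) (ar : S -> nat) (k : nat) (q0 : cq ar k) (E : examples ar k)
  (q' : cq ar k) :
  is_cq q' -> fits q' E -> contained q0 q' ->
  (~ (exists q'', [/\ is_cq q'', fits q'' E, contained q0 q'' & cod_lt q0 q'' q'])) <->
  (forall q'', is_cq q'' -> fits q'' E -> contained q0 q'' -> contained q' q'').
Proof.
move=> c' f' h0'; split.
  move=> N q'' c'' f'' h0''.
  have [q3 [c3 h31 h32 M]] := meet q'' c'.
  have f3 : fits q3 E.
    split.
      move=> e He; have [w1 a1] := f'.1 e He; have [_ a2] := f''.1 e He.
      by split => //; exact: M.
    by move=> e He D3; apply: (f'.2 e He); exact: (denot_sub h31) D3.
  have h03 : contained q0 q3.
    by apply/contained_answer; apply: M; apply/contained_answer.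
  suff H : contained q' q3 by move=> I a Ha; apply: h32; apply: H.
  apply: NNPP => nc; apply: N; exists q3; split => //; split.
    by rewrite cod_le_iff.
  by rewrite cod_le_iff.
move=> A [q'' [c'' f'' h0'' [le nle]]]; apply: nle.
by rewrite cod_le_iff //; exact: A.
Qed.

Lemma fits_canon (S : finType) (ar : S -> nat) (k : nat) (Epos Eneg : dex ar k -> Prop)
  (q q' : cq ar k) : is_cq q ->
  (fits q' ((fun e => Epos e \/ e = canon q), Eneg) <->
   fits q' (Epos, Eneg) /\ contained q q').
Proof.
move=> cq; split.
  case=> /= P N; split; first split => //.
    by move=> e He; apply: P; left.
  by apply/contained_answer; have [] := P (canon q) (or_intror erefl).
case=> [[/= P N] C]; split => //= e [He| ->]; first exact: P.
by split => //; apply/contained_answer.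
Qed.

Lemma map0_seq (s : seq nat) : map (fun _ => 0) s = nseq (size s) 0.
Proof. by elim: s => //= a s ->. Qed.
Lemma map0_tuple n (t : n.-tuple nat) : map_tuple (fun _ => 0) t = nseq_tuple n 0.
Proof. apply: val_inj => /=; by rewrite map0_seq size_tuple. Qed.

Theorem theorem8 (S : finType) (ar : S -> nat) (k : nat)
  (Epos Eneg : dex ar k -> Prop)
  (Hwf : forall e, Epos e \/ Eneg e -> wf_dex e) :
  (forall q q' : cq ar k, is_cq q -> is_cq q' ->
     (cod_gen q (Epos, Eneg) q' <->
      msf ((fun e => Epos e \/ e = canon q), Eneg) q')) /\
  (forall q : cq ar k, is_cq q ->
     (msf (Epos, Eneg) q <-> cod_gen (qbot ar k) (Epos, Eneg) q)).
Proof.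
split.
  move=> q q' Hq cq'; split.
    case=> _ f h N; split => //; first by apply/fits_canon.
    move=> q'' c'' /(@fits_canon _ _ _ _ _ _ _ Hq) [fe h''].
    exact: (proj1 (key cq' f h) N q'' c'' fe h'').
  case=> _ /(@fits_canon _ _ _ _ _ _ _ Hq) [f h] A; split => //.
  apply/(key cq' f h) => q'' c'' f'' h''; apply: A => //; exact/fits_canon.
move=> q Hq.
have hb : forall q', contained (qbot ar k) q'.
  move=> q'; apply/contained_answer; exists (fun _ => 0); split.
    move=> f fB; case: f fB => r t fB; rewrite /map_atom /mk_atom /=.
    apply/mapP; exists r; first by rewrite mem_enum.
    by rewrite map0_tuple.
  exact: map0_tuple.
split.
  case=> c f A; split => //; try exact: hb.
  by apply/(key c f (hb q)) => q'' c'' f'' _; exact: A.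
case=> c f _ N; split => // q'' c'' f''.
exact: (proj1 (key c f (hb q)) N q'' c'' f'' (hb q'')).
Qed.
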